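(* Let $L>0$ and let $a\in C^1_{\mathrm{pw}}[-L,L]$ with $a\ge a_{\min}>0$, and let $-L=z_0<\dots<z_N=L$ be a partition such that $a\in C^1[z_{j-1},z_j]$ and $a'$ is either $>0$ throughout or $\le0$ throughout on each $\tau_j=(z_{j-1},z_j)$. Define $\tilde a$ on each $\tau_j$ by $\tilde a=a$ if $a'>0$ on $\tau_j$, and $\tilde a\equiv a^+(z_{j-1})$ if $a'\le0$ on $\tau_j$ (right-continuous at $z_j$, $j<N$, left-continuous at $z_N$). Then $\mathrm{Var}(\tilde a)\le\mathrm{Var}(a)$. The analogous statement holds for a function $c$ of the same type.
   Context: $C^1_{\mathrm{pw}}[-L,L]$ is the set of $g:[-L,L]\to\mathbb{R}$ for which there is a finite partition $-L=z_0<\dots<z_N=L$ with $g\in C^1[z_{j-1},z_j]$ for each $j$ and, on each $(z_{j-1},z_j)$, either $g'>0$ throughout or $g'\le0$ throughout. For $g$ and such a partition: $g^\pm(z_j)$ are the right/left one-sided limits, $[g]_{z_j}=g^-(z_j)-g^+(z_j)$ for $1\le j\le N-1$, $\partial_{\mathrm{pw}}g=g'$ on each $(z_{j-1},z_j)$, and $\mathrm{Var}(g)=\sum_{\ell=1}^{N-1}|[g]_{z_\ell}|+\int_{-L}^L|\partial_{\mathrm{pw}}g(s)|\,ds$ (here computed with respect to the partition above). *)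

(* Defs.v *)
From HB Require Import structures.
From mathcomp Require Import all_boot all_order all_algebra.
From mathcomp Require Import all_classical all_reals all_analysis.
Set Implicit Arguments. Unset Strict Implicit. Unset Printing Implicit Defensive.
Import Order.TTheory GRing.Theory Num.Theory.
Import numFieldNormedType.Exports.
Local Open Scope classical_set_scope.
Local Open Scope ring_scope.

Section Defs.
Variable R : realType.

Definition rlim (g : R -> R) (c : R) : R := lim (g x @[x --> c^'+]).
Definition llim (g : R -> R) (c : R) : R := lim (g x @[x --> c^'-]).

Definition C1_closed (g : R -> R) (u v : R) : Prop :=
  exists f f' : R -> R,
    {in `]u, v[, g =1 f} /\
    {within `[u, v], continuous f} /\
    {within `[u, v], continuous f'} /\
    (forall x, x \in `]u, v[ -> is_derive x 1 f (f' x)).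

Definition deriv_pos_on (g : R -> R) (u v : R) : Prop :=
  forall x, x \in `]u, v[ -> 0 < derive1 g x.
Definition deriv_nonpos_on (g : R -> R) (u v : R) : Prop :=
  forall x, x \in `]u, v[ -> derive1 g x <= 0.

Definition pw_partition (L : R) (g : R -> R) (z : nat -> R) (N : nat) : Prop :=
  z 0%N = - L /\ z N = L /\ (forall j, (j < N)%N -> z j < z j.+1) /\
  (forall j, (1 <= j <= N)%N ->
     C1_closed g (z j.-1) (z j) /\
     (deriv_pos_on g (z j.-1) (z j) \/ deriv_nonpos_on g (z j.-1) (z j))).

(* Var(g) with respect to the partition z_0 < ... < z_N:
   sum of |[g]_{z_l}| for 1 <= l <= N-1, plus the integral over [-L,L] of
   |d_pw g|, d_pw g = g' on each open piece (split along the pieces). *)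
Definition Var (g : R -> R) (z : nat -> R) (N : nat) : R :=
  (\sum_(1 <= l < N) `|llim g (z l) - rlim g (z l)|) +
  (\sum_(1 <= j < N.+1)
      Rintegral lebesgue_measure `](z j.-1), (z j)[ (fun x => `|derive1 g x|)).

(* index j in 1..N of the piece [z_{j-1}, z_j) containing x (N if x = z_N) *)
Definition piece (z : nat -> R) (N : nat) (x : R) : nat :=
  \max_(1 <= j < N.+1 | z j.-1 <= x) j.

Definition atilde (a : R -> R) (z : nat -> R) (N : nat) (x : R) : R :=
  let j := piece z N x in
  if `[< deriv_pos_on a (z j.-1) (z j) >] then
    (if (z j.-1 < x < z j) then a x
     else if x == z N then llim a (z N) else rlim a (z j.-1))
  else rlim a (z j.-1).

End Defs.

(* Main.v *)
Require Import Defs.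
From HB Require Import structures.
From mathcomp Require Import all_boot all_order all_algebra.
From mathcomp Require Import all_classical all_reals all_analysis.
From mathcomp Require Import zify.
Import Order.TTheory GRing.Theory Num.Theory.
Import numFieldNormedType.Exports.
Local Open Scope classical_set_scope.
Local Open Scope ring_scope.

Section H.
Variable R : realType.
Implicit Types (g h f : R -> R) (u v : R).

Lemma near_right_in u v : u < v -> \forall x \near u^'+, x \in `]u, v[.
Proof.
move=> uv; near=> x; rewrite in_itv/=; apply/andP; split.
  by near: x; exact: nbhs_right_gt.
by near: x; exact: nbhs_right_lt.
Unshelve. all: by end_near. Qed.

Lemma near_left_in u v : u < v -> \forall x \near v^'-, x \in `]u, v[.
Proof.
move=> uv; near=> x; rewrite in_itv/=; apply/andP; split.
  by near: x; exact: nbhs_left_gt.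
by near: x; exact: nbhs_left_lt.
Unshelve. all: by end_near. Qed.

Lemma rlim_eq g h u v : u < v -> {in `]u, v[, g =1 h} -> rlim g u = rlim h u.
Proof.
move=> uv gh; rewrite /rlim; congr lim.
have N : {near u^'+, g =1 h}.
  by near=> x; apply: gh; near: x; exact: near_right_in.
rewrite eqEsubset; split; apply/near_eq_cvg => //.
by near do apply/esym; [].
Unshelve. all: by end_near. Qed.

Lemma llim_eq g h u v : u < v -> {in `]u, v[, g =1 h} -> llim g v = llim h v.
Proof.
move=> uv gh; rewrite /llim; congr lim.
have N : {near v^'-, g =1 h}.
  by near=> x; apply: gh; near: x; exact: near_left_in.
rewrite eqEsubset; split; apply/near_eq_cvg => //.
by near do apply/esym; [].
Unshelve. all: by end_near. Qed.

Lemma rlim_cst g c u v : u < v -> {in `]u, v[, forall x, g x = c} -> rlim g u = c.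
Proof.
move=> uv gc; rewrite /rlim; apply: lim_near_cst => //.
by near=> x; apply: gc; near: x; exact: near_right_in.
Unshelve. all: by end_near. Qed.

Lemma llim_cst g c u v : u < v -> {in `]u, v[, forall x, g x = c} -> llim g v = c.
Proof.
move=> uv gc; rewrite /llim; apply: lim_near_cst => //.
by near=> x; apply: gc; near: x; exact: near_left_in.
Unshelve. all: by end_near. Qed.

Lemma near_in_oo u v x : x \in `]u, v[ -> \forall y \near x, y \in `]u, v[.
Proof.
move=> xin; have op : open [set` `]u, v[] by exact: interval_open.
have := op; rewrite openE => /(_ x); rewrite inE in xin.
move=> /(_ xin); rewrite /interior => h; apply: filterS h => y.
by rewrite inE.
Qed.

Lemma derive1_eq g h u v x : {in `]u, v[, g =1 h} -> x \in `]u, v[ ->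
  derive1 g x = derive1 h x.
Proof.
move=> gh xin; rewrite !derive1E; apply: near_eq_derive.
near=> y; apply: gh; near: y; exact: near_in_oo.
Unshelve. all: by end_near. Qed.


Lemma within_right f u v : u < v -> {within `[u, v], continuous f} ->
  f x @[x --> u^'+] --> f u.
Proof.
move=> uv /subspace_continuousP /(_ u) h.
have {}h : f x @[x --> within [set` `[u, v]] (nbhs u)] --> f u.
  by apply: h; rewrite /= in_itv/= lexx ltW.
apply: cvg_trans h; apply: cvg_app => P /= hP.
have hP' : \forall y \near u, [set` `[u, v]] y -> P y := hP.
change (\forall y \near u, u < y -> P y).
have yv := lt_le_nbhsl uv.
near=> y => uy.
have : [set` `[u, v]] y -> P y by near: y.
apply; rewrite /= in_itv/= (ltW uy) /=.
by near: y.
Unshelve. all: by end_near. Qed.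

Lemma within_left f u v : u < v -> {within `[u, v], continuous f} ->
  f x @[x --> v^'-] --> f v.
Proof.
move=> uv /subspace_continuousP /(_ v) h.
have {}h : f x @[x --> within [set` `[u, v]] (nbhs v)] --> f v.
  by apply: h; rewrite /= in_itv/= lexx ltW.
apply: cvg_trans h; apply: cvg_app => P /= hP.
have hP' : \forall y \near v, [set` `[u, v]] y -> P y := hP.
change (\forall y \near v, y < v -> P y).
have uy := lt_le_nbhsr uv.
near=> y => yv.
have : [set` `[u, v]] y -> P y by near: y.
apply; rewrite /= in_itv/= (ltW yv) andbT.
by near: y.
Unshelve. all: by end_near. Qed.


Arguments rlim_eq {g h u v}.
Arguments llim_eq {g h u v}.
Arguments rlim_cst {g c u v}.
Arguments llim_cst {g c u v}.
Arguments derive1_eq {g h u v x}.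
Arguments within_right {f u v}.
Arguments within_left {f u v}.

Lemma C1_jump g u v : u < v -> C1_closed g u v ->
  `|llim g v - rlim g u| <=
  Rintegral lebesgue_measure `]u, v[ (fun x => `|derive1 g x|).
Proof.
move=> uv [f [f' [gf [cf [cf' df]]]]].
have -> : rlim g u = f u.
  rewrite (rlim_eq uv gf) /rlim; exact: (cvg_lim (@Rhausdorff R) (within_right uv cf)).
have -> : llim g v = f v.
  rewrite (llim_eq uv gf) /llim; exact: (cvg_lim (@Rhausdorff R) (within_left uv cf)).
have dfe : {in `]u, v[, derive1 f =1 f'}.
  by move=> x xin; rewrite derive1E; have := df x xin => H; exact: (@derive_val _ _ _ _ _ _ _ H).
have -> : Rintegral lebesgue_measure `]u, v[ (fun x => `|derive1 g x|) =
    Rintegral lebesgue_measure `]u, v[ (fun x => `|f' x|).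
  apply: eq_Rintegral => x; rewrite inE => xin; by rewrite (derive1_eq gf xin) dfe.
have cabs : {within `[u, v], continuous (fun x => `|f' x|)}.
  move=> x; apply: continuous_comp; [exact: cf'|exact: norm_continuous].
have iabs : lebesgue_measure.-integrable `[u, v] (EFin \o (fun x => `|f' x|)).
  by apply: continuous_compact_integrable => //; exact: segment_compact.
have intf : lebesgue_measure.-integrable `[u, v] (EFin \o f').
  by apply: continuous_compact_integrable => //; exact: segment_compact.
rewrite Rintegral_itv_obnd_cbnd; last first.
  by apply: integrableS iabs => //; exact: subset_itv_oo_cc.
rewrite Rintegral_itv_bndo_bndc; last first.
  apply: integrableS iabs => //; apply: subset_itvl; by rewrite bnd_simp.
have dF : derivable_oo_LRcontinuous f u v.
  split.
  - move=> x xin; exact: (@ex_derive _ _ _ _ _ _ _ (df x xin)).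
  - exact: (within_right uv cf).
  - exact: (within_left uv cf).
have ftc : (\int[lebesgue_measure]_(x in `[u, v]) (f' x)%:E = (f v)%:E - (f u)%:E)%E.
  exact: (continuous_FTC2 uv cf' dF dfe).
have := le_normr_Rintegral _ intf.
rewrite {1}/Rintegral ftc /= => /(_ (measurable_itv _)).
by [].
Qed.


Lemma z_lt (z : nat -> R) N : (forall j, (j < N)%N -> z j < z j.+1) ->
  forall i k, (i < k <= N)%N -> z i < z k.
Proof.
move=> zinc i; elim=> [|k IH]; first by [].
move=> /andP[ik kN].
have kN' : (k < N)%N by [].
rewrite leq_eqVlt ltnS in ik; case/orP: ik => [/eqP [->]|ik]; first exact: zinc.
apply: lt_trans (zinc _ kN'); apply: IH; rewrite ik /=; exact: ltnW.
Qed.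

Arguments z_lt {z N}.

Lemma piece_eq (z : nat -> R) N j x : (forall j, (j < N)%N -> z j < z j.+1) ->
  (1 <= j <= N)%N -> x \in `](z j.-1), (z j)[ -> piece z N x = j.
Proof.
move=> zinc /andP[j1 jN]; rewrite in_itv/= => /andP[lx xr].
apply/eqP; rewrite eqn_leq; apply/andP; split.
  apply/bigmax_leqP_seq => i; rewrite mem_index_iota => /andP[i1 iN] zi.
  rewrite leqNgt; apply/negP => ji.
  have : z j <= z i.-1.
    have [->|ji'] : j = i.-1 \/ (j < i.-1)%N by lia.
      by [].
    by apply/ltW/(z_lt zinc); lia.
  by move=> /(lt_le_trans xr); rewrite ltNge zi.
apply: (@leq_bigmax_seq _ _ (fun i => z i.-1 <= x) (fun i => i) j).
  by rewrite mem_index_iota j1 ltnS.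
exact: ltW.
Qed.


End H.

Arguments piece_eq {R z N j x}.
Arguments rlim_eq {R g h u v}.
Arguments llim_eq {R g h u v}.
Arguments rlim_cst {R g c u v}.
Arguments llim_cst {R g c u v}.
Arguments derive1_eq {R g h u v x}.

Theorem proposition5p6 (R : realType) (L amin : R) (a : R -> R)
    (z : nat -> R) (N : nat) :
  0 < L -> 0 < amin ->
  (forall x, x \in `[- L, L] -> amin <= a x) ->
  pw_partition L a z N ->
  Var (atilde a z N) z N <= Var a z N.
Proof.
move=> _ _ _ [_ [_ [zinc hp]]].
set pos := fun j => `[< deriv_pos_on a (z j.-1) (z j) >].
set at_ := atilde a z N.
have zlt j : (1 <= j <= N)%N -> z j.-1 < z j.
  move=> hj; have := zinc j.-1; rewrite prednK; last by lia.
  by apply; lia.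
have at_on j x : (1 <= j <= N)%N -> x \in `](z j.-1), (z j)[ ->
    at_ x = if pos j then a x else rlim a (z j.-1).
  move=> hj xin; rewrite /at_ /atilde (piece_eq zinc hj xin).
  have xin' := xin; rewrite in_itv/= in xin'; rewrite xin'.
  by case: ifP.
have Ieq j : (1 <= j <= N)%N ->
    Rintegral lebesgue_measure `](z j.-1), (z j)[ (fun x => `|derive1 at_ x|) =
    if pos j then Rintegral lebesgue_measure `](z j.-1), (z j)[ (fun x => `|derive1 a x|)
    else 0.
  move=> hj; case: ifP => pj.
    apply: eq_Rintegral => x; rewrite inE => xin.
    rewrite (@derive1_eq _ _ a _ _ _ _ xin) // => y yin.
    by rewrite (at_on j y hj yin) pj.
  rewrite (@eq_Rintegral _ _ _ _ _ (fun=> 0)).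
    by rewrite /Rintegral integral0.
  move=> x; rewrite inE => xin.
  have e : {in `](z j.-1), (z j)[, at_ =1 cst (rlim a (z j.-1))}.
    by move=> y yin; rewrite (at_on j y hj yin) pj.
  by rewrite /= (derive1_eq e xin) derive1_cst normr0.
have Jl j : (1 <= j <= N)%N ->
    llim at_ (z j) = if pos j then llim a (z j) else rlim a (z j.-1).
  move=> hj; case: ifP => pj.
    by apply: (llim_eq (zlt j hj)) => y yin; rewrite (at_on j y hj yin) pj.
  by apply: (llim_cst (zlt j hj)) => y yin; rewrite (at_on j y hj yin) pj.
have Jr l : (1 <= l < N)%N -> rlim at_ (z l) = rlim a (z l).
  move=> hl; have hl1 : (1 <= l.+1 <= N)%N by lia.
  have := zlt _ hl1; have := at_on _ _ hl1; rewrite /= => ao zl.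
  case pj : (pos l.+1).
    by apply: (rlim_eq zl) => y yin; rewrite (ao y yin) pj.
  by apply: (rlim_cst zl) => y yin; rewrite (ao y yin) pj.
have Ia0 j : (1 <= j <= N)%N ->
    0 <= Rintegral lebesgue_measure `](z j.-1), (z j)[ (fun x => `|derive1 a x|).
  by move=> hj; apply: Rintegral_ge0 => x _.
have [N0|Npos] := posnP N.
  by rewrite /Var N0 !big_geq.
have sr (F : nat -> R) : \sum_(1 <= j < N.+1) F j = \sum_(1 <= j < N) F j + F N.
  by rewrite big_nat_recr.
rewrite /Var !sr.
have key l : (1 <= l < N)%N ->
    `|llim at_ (z l) - rlim at_ (z l)| +
    Rintegral lebesgue_measure `](z l.-1), (z l)[ (fun x => `|derive1 at_ x|) <=
    `|llim a (z l) - rlim a (z l)| +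
    Rintegral lebesgue_measure `](z l.-1), (z l)[ (fun x => `|derive1 a x|).
  move=> hl; have hl' : (1 <= l <= N)%N by lia.
  rewrite (Jr l hl) (Jl l hl') (Ieq l hl').
  case: ifP => pj; first by [].
  rewrite addr0; apply: le_trans (ler_distD (llim a (z l)) _ _) _.
  rewrite [X in _ <= X]addrC lerD2r distrC; apply: C1_jump; first exact: zlt.
  by have [] := hp l hl'.
rewrite !addrA -!big_split; apply: lerD.
  by apply: ler_sum_nat => l hl; exact: key.
have hN : (1 <= N <= N)%N by lia.
by rewrite (Ieq N hN); case: ifP => _ //; exact: Ia0.
Qed.
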